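(* Let $P$ be a countable multiset of primes, $G=\bigoplus_{p\in P}\mathbb{F}_p$, let $X$ be an ergodic $G$-system, let $d\geq 0$, and let $q:G\times X\to S^1$ be a phase polynomial of degree $<d$ which is also a cocycle. Then for every $g\in G$, $q(g,\cdot)$ takes values in $C_m$, where $m=n^d$ and $n$ is the order of $g$.
   Context: $C_m$ is the group of $m$-th roots of unity. A $G$-system is a compact metrizable probability space with measure-preserving $G$-action $(T_g)$; ergodic: only constants invariant. $q$ is a phase polynomial of degree $<d$ if for each $g$, $\Delta_{h_1}\cdots\Delta_{h_d}q(g,\cdot)=1$ a.e. for all $h_i\in G$, where $\Delta_h\phi=(\phi\circ T_h)/\phi$. $q$ is a cocycle if $q(g+g',x)=q(g,x)q(g',T_gx)$. *)

(* Defs.v *)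
From HB Require Import structures.
From mathcomp Require Import all_boot all_order all_algebra.
From mathcomp Require Import all_classical all_reals all_analysis.
From mathcomp Require complex.
Import complex.ComplexField.
Set Implicit Arguments. Unset Strict Implicit. Unset Printing Implicit Defensive.
Import Order.TTheory GRing.Theory Num.Theory.
Local Open Scope classical_set_scope.
Local Open Scope ring_scope.

(* The group G = (+)_{i in I} F_{p i}, for a countable multiset of primes  *)
(* P = (p i)_{i in I} (I a countable index type, p i prime).               *)
Section DirectSum.
Variables (I : countType) (p : I -> nat).

Definition dsum_pred (g : I -> nat) : Prop :=
  (forall i, (g i < p i)%N) /\ finite_set [set i | g i != 0%N].

Definition dsum : Type := {g : I -> nat | dsum_pred g}.

Definition dsum_val (g : dsum) : I -> nat := proj1_sig g.

Lemma dsum0_proof : (forall i, prime (p i)) -> dsum_pred (fun _ => 0%N).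
Proof.
move=> pr; split=> [i|]; first exact: prime_gt0.
by have -> : [set i : I | 0%N != 0%N] = set0 by apply/seteqP; split.
Qed.

Lemma dsumD_proof (pr : forall i, prime (p i)) (g h : dsum) :
  dsum_pred (fun i => (dsum_val g i + dsum_val h i) %% p i)%N.
Proof.
case: g h => [g [_ fg]] [h [_ fh]] /=; split=> [i|].
  by rewrite ltn_pmod // prime_gt0.
have fU : finite_set ([set i | g i != 0%N] `|` [set i | h i != 0%N]).
  by rewrite finite_setU.
apply: (sub_finite_set _ fU) => i /=.
case: (boolP (g i == 0%N)) => [/eqP -> | ?]; last by left.
case: (boolP (h i == 0%N)) => [/eqP -> | ?]; last by right.
by rewrite mod0n eqxx.
Qed.

End DirectSum.

Section Group.
Variables (I : countType) (p : I -> nat) (pr : forall i, prime (p i)).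

Definition dsum0 : dsum p := exist _ _ (dsum0_proof pr).
Definition dsumD (g h : dsum p) : dsum p := exist _ _ (dsumD_proof pr g h).

End Group.

Definition dsum_order (I : countType) (p : I -> nat) (g : dsum p) (n : nat)
  : Prop :=
  (0 < n)%N /\ (forall i, (n * dsum_val g i) %% p i = 0)%N /\
  (forall k, (0 < k)%N -> (forall i, (k * dsum_val g i) %% p i = 0)%N ->
     (n <= k)%N).

Section System.
Variables (R : realType) (X : pseudoPMetricType R).

Definition borel (X' : pseudoPMetricType R) := g_sigma_algebraType (@open X').

Variables (G : Type) (G0 : G) (Gadd : G -> G -> G).
Variables (mu : probability (borel X) R) (T : G -> borel X -> borel X).

Definition mp_action : Prop :=
  (forall g, measurable_fun setT (T g)) /\
  (forall g (A : set (borel X)), measurable A -> mu (T g @^-1` A) = mu A) /\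
  (forall x, T G0 x = x) /\
  (forall g h x, T (Gadd g h) x = T g (T h x)).

Definition ergodic : Prop :=
  forall f : borel X -> R, measurable_fun setT f ->
    (forall g, {ae mu, forall x, f (T g x) = f x}) ->
    exists c : R, {ae mu, forall x, f x = c}.

Definition mderiv (h : G) (phi : borel X -> complex.complex R)
  : borel X -> complex.complex R :=
  fun x => phi (T h x) / phi x.

Definition mderivs (hs : seq G) (phi : borel X -> complex.complex R) :=
  foldr mderiv phi hs.

Definition circle_valued (q : G -> borel X -> complex.complex R) : Prop :=
  (forall g x, `|q g x| = 1) /\
  (forall g, measurable_fun setT (fun x => complex.Re (q g x))) /\
  (forall g, measurable_fun setT (fun x => complex.Im (q g x))).

Definition phase_poly_lt (d : nat) (q : G -> borel X -> complex.complex R)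
  : Prop :=
  forall g (hs : seq G), size hs = d ->
    {ae mu, forall x, mderivs hs (q g) x = 1}.

Definition cocycle (q : G -> borel X -> complex.complex R) : Prop :=
  forall g g' x, q (Gadd g g') x = q g x * q g' (T g x).

End System.

(* Main.v *)
Require Import Defs.
From HB Require Import structures.
From mathcomp Require Import all_boot all_order all_algebra.
From mathcomp Require Import all_classical all_reals all_analysis.
From mathcomp Require Import ring.
From mathcomp Require complex.
Import complex.ComplexField.
Import Order.TTheory GRing.Theory Num.Theory.
Local Open Scope classical_set_scope.
Local Open Scope ring_scope.

Lemma telescope_prod (R : fieldType) (F : nat -> R) (hF : forall i, F i != 0) k :
  \prod_(i < k) (F i.+1 / F i) = F k / F 0%N.
Proof.
elim: k => [|k IH]; first by rewrite big_ord0 divff.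
rewrite big_ord_recr /= IH; field.
by rewrite hF hF.
Qed.

Section G.
Variables (I : countType) (p : I -> nat) (pr : forall i, prime (p i)).

Definition kg (g : dsum p) k := iter k (dsumD pr g) (dsum0 pr).

Lemma kg_val g k i : dsum_val (kg g k) i = ((k * dsum_val g i) %% p i)%N.
Proof.
elim: k => [|k IH]; first by rewrite /= mul0n mod0n.
rewrite /kg iterS -/(kg g k) /= IH modnDmr mulSn //.
Qed.

Lemma kg_order g n : dsum_order g n -> kg g n = dsum0 pr.
Proof.
move=> [_ [h _]].
rewrite /dsum0; case E: (kg g n) => [v pv].
apply: eq_exist; apply: funext => i.
by have := kg_val g n i; rewrite E /= h.
Qed.
End G.

Lemma ae_comp (R : realType) (X : pseudoPMetricType R)
  (mu : probability (borel X) R) (f : borel X -> borel X)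
  (mf : measurable_fun setT f)
  (pf : forall A : set (borel X), measurable A -> mu (f @^-1` A) = mu A)
  (P : borel X -> Prop) :
  {ae mu, forall x, P x} -> {ae mu, forall x, P (f x)}.
Proof.
rewrite /prop_near1 /nbhs /=.
move=> [A [mA muA sA]].
exists (f @^-1` A); split.
- by rewrite -[_ @^-1` _]setTI; apply: mf.
- by rewrite pf.
- by move=> x /= Px; apply: sA.
Qed.

Lemma ae_iter (R : realType) (X : pseudoPMetricType R)
  (mu : probability (borel X) R) (f : borel X -> borel X)
  (mf : measurable_fun setT f)
  (pf : forall A : set (borel X), measurable A -> mu (f @^-1` A) = mu A)
  (P : borel X -> Prop) :
  {ae mu, forall x, P x} -> forall k, {ae mu, forall x, P (iter k f x)}.
Proof.
move=> hP; elim=> [//|k IH].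
have := @ae_comp _ _ mu f mf pf _ IH.
by apply: filterS => x /=; rewrite -iterSr.
Qed.

Lemma ae_iter_all (R : realType) (X : pseudoPMetricType R)
  (mu : probability (borel X) R) (f : borel X -> borel X)
  (mf : measurable_fun setT f)
  (pf : forall A : set (borel X), measurable A -> mu (f @^-1` A) = mu A)
  (P : borel X -> Prop) :
  {ae mu, forall x, P x} ->
  forall n, {ae mu, forall x, forall k, (k < n)%N -> P (iter k f x)}.
Proof.
move=> hP; elim=> [|n IH].
  by apply: nearW => x k.
have H := @filterI _ _ (ae_filter_ringOfSetsType mu) _ _ IH (@ae_iter _ _ mu f mf pf _ hP n).
move: H; apply: filterS => x [H1 H2] k; rewrite ltnS leq_eqVlt => /orP[/eqP -> //|].
exact: H1.
Qed.

Section Main.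
Variables (I : countType) (p : I -> nat) (pr : forall i, prime (p i)).
Variables (R : realType) (X : pseudoPMetricType R).
Variables (mu : probability (borel X) R) (T : dsum p -> borel X -> borel X).
Hypothesis hT : mp_action (dsum0 pr) (dsumD pr) mu T.
Variable q : dsum p -> borel X -> complex.complex R.
Hypothesis hq : circle_valued q.
Hypothesis hcoc : cocycle (dsumD pr) T q.
Variables (g : dsum p) (n : nat).
Hypothesis hn : dsum_order g n.

Definition ff j := iter j (mderiv T g) (q g).

Lemma ff_norm j x : `|ff j x| = 1.
Proof.
elim: j x => [|j IH] x; first by case: hq => h _; apply: h.
by rewrite /ff iterS -/(ff j) /mderiv normrM normfV !IH invr1 mulr1.
Qed.

Lemma ff_nz j x : (ff j x : GRing.Field.sort _) != 0.
Proof. by rewrite -normr_eq0 ff_norm oner_eq0. Qed.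

Lemma T0 x : T (dsum0 pr) x = x.
Proof. by case: hT => _ [_ [h _]]; apply: h. Qed.

Lemma T_kg k x : T (@kg I p pr g k) x = iter k (T g) x.
Proof.
elim: k x => [|k IH] x; first exact: T0.
by rewrite /kg iterS -/(@kg I p pr g k); case: hT => _ [_ [_ h]]; rewrite h IH.
Qed.

Lemma q0 x : q (dsum0 pr) x = 1.
Proof.
have E : dsumD pr (dsum0 pr) (dsum0 pr) = dsum0 pr.
  by apply: eq_exist; apply: funext => i /=; rewrite addn0 mod0n.
have := hcoc (dsum0 pr) (dsum0 pr) x; rewrite E T0.
have nz : (q (dsum0 pr) x : GRing.Field.sort _) != 0.
  by case: hq => h _; rewrite -normr_eq0 h oner_eq0.
by rewrite -{1}[q _ x]mulr1 => /(mulfI nz) ->.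
Qed.

Lemma q_kg k x : q (@kg I p pr g k) x = \prod_(i < k) q g (iter i (T g) x).
Proof.
elim: k x => [|k IH] x; first by rewrite big_ord0 q0.
rewrite /kg iterS -/(@kg I p pr g k) hcoc IH big_ord_recl /=.
by congr (_ * _); apply: eq_bigr => i _; rewrite -iterSr.
Qed.

Lemma iter_n x : iter n (T g) x = x.
Proof. by rewrite -T_kg kg_order // T0. Qed.

Lemma prod_ff j x : \prod_(i < n) ff j (iter i (T g) x) = 1.
Proof.
case: j => [|j].
  by rewrite /ff /= -q_kg kg_order // q0.
rewrite (eq_bigr (fun i : 'I_n => ff j (iter i.+1 (T g) x) / ff j (iter i (T g) x))).
  by rewrite (@telescope_prod _ (fun i => ff j (iter i (T g) x)) (fun i => ff_nz j _)) /= iter_n divff // ff_nz.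
by move=> i _; rewrite /ff iterS /mderiv.
Qed.

Lemma step j N : {ae mu, forall x, ff j.+1 x ^+ N = 1} ->
  {ae mu, forall x, ff j x ^+ (N * n) = 1}.
Proof.
move=> H.
have mf : measurable_fun setT (T g) by case: hT => h _; apply: h.
have pf : forall A : set (borel X), measurable A -> mu (T g @^-1` A) = mu A.
  by case: hT => _ [h _]; apply: h.
have H2 := @ae_iter_all _ _ mu (T g) mf pf _ H n.
move: H2; apply: filterS => x Hx.
have E : forall k, (k <= n)%N -> ff j (iter k (T g) x) ^+ N = ff j x ^+ N.
  elim=> [//|k IH] hk.
  have := Hx k hk; rewrite /ff iterS /mderiv -/(ff j) => h1.
  rewrite -IH ?(ltnW hk) //.
  have -> : ff j (T g (iter k (T g) x)) =
     ff j (T g (iter k (T g) x)) / ff j (iter k (T g) x) * ff j (iter k (T g) x).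
    by rewrite mulrVK // unitfE ff_nz.
  by rewrite exprMn h1 mul1r.
have := congr1 (fun z => z ^+ N) (prod_ff j x); rewrite /= expr1n -prodrXl.
rewrite (eq_bigr (fun _ => ff j x ^+ N)); last by move=> i _; apply: E; apply: ltnW.
by rewrite prodr_const card_ord -exprM.
Qed.

End Main.

Theorem propositionB1
  (I : countType) (p : I -> nat) (pr : forall i, prime (p i))
  (R : realType) (X : pseudoPMetricType R)
  (hX : hausdorff_space X) (cX : compact [set: X])
  (mu : probability (borel X) R) (T : dsum p -> borel X -> borel X)
  (hT : mp_action (dsum0 pr) (dsumD pr) mu T)
  (herg : ergodic mu T)
  (d : nat) (q : dsum p -> borel X -> complex.complex R)
  (hq : circle_valued q)
  (hpp : phase_poly_lt mu T d q)
  (hcoc : cocycle (dsumD pr) T q) :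
  forall (g : dsum p) (n : nat), dsum_order g n ->
    {ae mu, forall x, q g x ^+ (n ^ d)%N = 1}.
Proof.
move=> g n hn.
have base : {ae mu, forall x, @ff I p R X T q g d x = 1}.
  have := hpp g (nseq d g) (size_nseq _ _); apply: filterS => x.
  suff -> : mderivs T (nseq d g) (q g) = @ff I p R X T q g d by [].
  by rewrite /ff; elim: (d) => //= k ->.
suff H : forall m, (m <= d)%N ->
    {ae mu, forall x, @ff I p R X T q g (d - m) x ^+ (n ^ m)%N = 1}.
  by have := H d (leqnn d); rewrite subnn.
elim=> [_|m IH hm]; first by rewrite subn0; move: base; apply: filterS => x /= ->.
have := @step _ _ pr _ _ mu T hT q hq hcoc g n hn (d - m.+1) (n ^ m)%N.
rewrite subnSK // expnSr; apply; exact: IH (ltnW hm).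
Qed.
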